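(* Suppose each $f_i$ is continuously differentiable and there exist $\mu>0$, $L>0$ with $-L\le\frac1{M_i}f_i'(w)\le-\mu$ for all $i$ and all $w\in\mathbb R$. Let $\omega_b$ solve the blended dynamics and let $\tilde f(t):=Y^TM^{-1/2}\big(f(\mathbb 1_N\omega_b(t))+\xi(t)\big)$. If $C:=\max_{i}\sup_{t>0}|\dot\xi_i(t)|/M_i$ is finite, then for all $t>0$, $$\Big|\frac{d\tilde f}{dt}\Big|^2\le 2NM_bC^2\Big(1+\frac L\mu\Big)^2+\frac{2NL^2}{M_b}\,|f_b(\omega_b(0))+\xi_b(0_+)|^2e^{-2\mu t}.$$ If $C_{\lim}:=\max_i\limsup_{t\to\infty}|\dot\xi_i(t)|/M_i$ is finite, then $$\limsup_{t\to\infty}\Big|\frac{d\tilde f}{dt}\Big|^2\le 2NM_bC_{\lim}^2\Big(1+\frac L\mu\Big)^2.$$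
   Context: $N\ge2$ nodes with $M_i>0$, $M=\mathrm{diag}(M_1,\dots,M_N)$, $M_b=\frac1N\sum_iM_i$; functions $f_i:\mathbb R\to\mathbb R$ with $f_i(0)=0$, $f(\omega)=(f_1(\omega_1),\dots,f_N(\omega_N))^T$, $f_b(w)=\frac1N\sum_if_i(w)$. Disturbances $\xi=(\xi_1,\dots,\xi_N)^T$ are continuously differentiable on $(0,\infty)$, possibly with a finite jump at $t=0$ ($\xi(0_+)$ the right limit); $\xi_b=\frac1N\sum_i\xi_i$. The blended dynamics is the scalar ODE $M_b\dot\omega_b=f_b(\omega_b)+\xi_b(t)$ with some initial value $\omega_b(0)$. $\mathbb 1_N$ is the all-ones vector, and $Y\in\mathbb R^{N\times(N-1)}$ is a matrix whose columns form an orthonormal basis of the null space of $\mathbb 1_N^TM^{1/2}$. $|\cdot|$ is the Euclidean norm. *)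

(* Defs.v *)
From mathcomp Require Import all_boot all_order all_algebra.
From mathcomp Require Import all_classical all_reals all_analysis.
Import Order.TTheory GRing.Theory Num.Theory numFieldTopology.Exports numFieldNormedType.Exports.

Set Implicit Arguments.
Unset Strict Implicit.
Unset Printing Implicit Defensive.

Local Open Scope classical_set_scope.
Local Open Scope ring_scope.

Section Defs.
Variables (R : realType) (N : nat).

Definition Mbar (M : 'I_N -> R) : R := N%:R^-1 * \sum_(i < N) M i.

Definition fbar (f : 'I_N -> R -> R) (w : R) : R := N%:R^-1 * \sum_(i < N) f i w.

Definition xibar (xi : 'I_N -> R -> R) (t : R) : R := N%:R^-1 * \sum_(i < N) xi i t.

(* M^{1/2} as a row vector 1_N^T M^{1/2} *)
Definition onesT_Msqrt (M : 'I_N -> R) : 'rV[R]_N := \row_i Num.sqrt (M i).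

Definition Minvsqrt (M : 'I_N -> R) : 'M[R]_N := diag_mx (\row_i (Num.sqrt (M i))^-1).

Definition orthonormal_null_basis (M : 'I_N -> R) (Y : 'M[R]_(N, N.-1)) : Prop :=
  [/\ Y^T *m Y = 1%:M,
      onesT_Msqrt M *m Y = 0
    & forall v : 'cV[R]_N, onesT_Msqrt M *m v = 0 -> exists c : 'cV[R]_(N.-1), v = Y *m c].

Definition blended_solution (M : 'I_N -> R) (f xi : 'I_N -> R -> R) (omb : R -> R) : Prop :=
  omb t @[t --> 0^'+] --> omb 0 /\
  forall t : R, 0 < t ->
    derivable omb t 1 /\ Mbar M * derive1 omb t = fbar f (omb t) + xibar xi t.

Definition tilde_f (M : 'I_N -> R) (Y : 'M[R]_(N, N.-1)) (f xi : 'I_N -> R -> R)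
  (omb : R -> R) (t : R) : 'cV[R]_(N.-1) :=
  Y^T *m Minvsqrt M *m (\col_i (f i (omb t) + xi i t)).

Definition eucl_sq (n : nat) (v : 'cV[R]_n) : R := \sum_(k < n) (v k 0) ^+ 2.

Definition xi_rate_set (M : 'I_N -> R) (xi : 'I_N -> R -> R) (i : 'I_N) : set R :=
  [set `|derive1 (xi i) t| / M i | t in [set t : R | 0 < t]].

Definition Cxi (M : 'I_N -> R) (xi : 'I_N -> R -> R) : R :=
  \big[Num.max/0]_(i < N) sup (xi_rate_set M xi i).

Definition limsup_pinfty (g : R -> R) : \bar R :=
  limf_esup (fun t : R => (g t)%:E) (pinfty_nbhs R).

Definition Clim_xi (M : 'I_N -> R) (xi : 'I_N -> R -> R) : \bar R :=
  \big[Order.max/-oo%E]_(i < N) limsup_pinfty (fun t => `|derive1 (xi i) t| / M i).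

End Defs.

(* Main.v *)
Require Import Defs.
From mathcomp Require Import all_boot all_order all_algebra.
From mathcomp Require Import all_classical all_reals all_analysis.
Import Order.TTheory GRing.Theory Num.Theory numFieldTopology.Exports numFieldNormedType.Exports.
Local Open Scope classical_set_scope.
Local Open Scope ring_scope.
From mathcomp Require Import ring lra.

Section S.
Variable R : realType.

Lemma eucl_sqE n (v : 'cV[R]_n) : eucl_sq v = (v^T *m v) 0 0.
Proof. by rewrite /eucl_sq mxE; apply: eq_bigr => k _; rewrite !mxE expr2. Qed.

Lemma eucl_sq_ge0 n (v : 'cV[R]_n) : 0 <= eucl_sq v.
Proof. by rewrite /eucl_sq; apply: sumr_ge0 => k _; exact: sqr_ge0. Qed.

Lemma proj_le n m (Y : 'M[R]_(n, m)) (w : 'cV[R]_n) :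
  Y^T *m Y = 1%:M -> eucl_sq (Y^T *m w) <= eucl_sq w.
Proof.
move=> YY.
set u := Y^T *m w.
set q := w - Y *m u.
have Yq : Y^T *m q = 0.
  by rewrite /q mulmxBr mulmxA YY mul1mx subrr.
have wE : w = Y *m u + q by rewrite /q addrC subrK.
clearbody q.
have -> : eucl_sq w = eucl_sq u + eucl_sq q.
  have trD : (Y *m u + q)^T = (Y *m u)^T + q^T by apply/matrixP => i j; rewrite !mxE.
  rewrite !eucl_sqE {1 2}wE trD mulmxDl !mulmxDr.
  have h1 : (Y *m u)^T *m (Y *m u) = u^T *m u.
    by rewrite trmx_mul -mulmxA (mulmxA Y^T) YY mul1mx.
  have h2 : (Y *m u)^T *m q = 0.
    by rewrite trmx_mul -mulmxA Yq mulmx0.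
  have h3 : q^T *m (Y *m u) = 0.
    by rewrite mulmxA -(trmxK Y) -trmx_mul Yq trmx0 mul0mx.
  by rewrite h1 h2 h3 addr0 add0r !mxE.
have := @eucl_sq_ge0 _ q; lra.
Qed.
End S.

Section S.
Variable R : realType.

Lemma is_derive_comp1 (f g : R -> R) (x df dg : R) :
  is_derive x 1 f df -> is_derive (f x) 1 g dg ->
  is_derive x 1 (g \o f) (dg * df).
Proof.
move=> [d1 e1] [d2 e2]; apply: DeriveDef.
  apply/derivable1_diffP; apply: differentiable_comp; exact/derivable1_diffP.
by rewrite -derive1E derive1_comp // !derive1E e1 e2.
Qed.

Lemma is_derive_affine (a b x : R) : is_derive x 1 (fun t => a * (t - b)) a.
Proof.
apply: DeriveDef.
  apply: derivableM; first exact: derivable_cst.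
  by apply: derivableB => //; exact: derivable_cst.
rewrite deriveM //.
rewrite deriveD // derive_id derive_cst derive_cst addr0 scaler0 addr0.
by rewrite /GRing.scale /= mulr1.
Qed.

Lemma is_derive_E (c a b K x : R) :
  is_derive x 1 (fun t => c * expR (a * (t - b)) + K) (c * (expR (a * (x - b)) * a)).
Proof.
have hE : is_derive x 1 (expR \o (fun t => a * (t - b))) (expR (a * (x - b)) * a).
  apply: is_derive_comp1; first exact: is_derive_affine.

have -> : (fun t => c * expR (a * (t - b)) + K) =
  ((cst c) * (expR \o (fun t => a * (t - b)))) + cst K by apply/funext.
apply: is_derive_eq.
by rewrite scaler0 !addr0.
Qed.

Lemma derivable_cont (f : R -> R) x : derivable f x 1 -> {for x, continuous f}.
Proof. by move=> /derivable1_diffP /differentiable_continuous. Qed.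


Lemma cmp_pos (z : R -> R) (t0 mu B z0 : R) :
  0 < mu -> 0 <= B ->
  (forall t, t0 < t -> derivable z t 1) ->
  z t @[t --> t0^'+] --> z0 ->
  (forall t, t0 < t -> 0 < z t -> derive1 z t <= - mu * z t + B) ->
  forall t, t0 < t -> z t <= `|z0| * expR (- mu * (t - t0)) + B / mu.
Proof.
move=> mu0 B0 dz zlim dzle t1 t01.
rewrite leNgt; apply/negP => H.
pose G := fun t => `|z0| * expR (- mu * (t - t0)) + B / mu.
pose phi := (z - G)%R.
have phiE t : phi t = z t - G t by [].
have phi1 : 0 < phi t1 by rewrite phiE subr_gt0.
have dG (t : R) : is_derive t 1 G (`|z0| * (expR (- mu * (t - t0)) * - mu)).
  exact: is_derive_E.
have dphi (t : R) : t0 < t -> is_derive t 1 phi (derive1 z t - `|z0| * (expR (- mu * (t - t0)) * - mu)).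
  move=> tt; apply: is_deriveB; rewrite derive1E; apply: derivableP; exact: dz.
have cphi (t : R) : t0 < t -> {for t, continuous phi}.
  by move=> /dphi [d _]; exact: derivable_cont.
have Gc : {for t0, continuous G}.
  by have [d _] := dG t0; exact: derivable_cont.
have philim : phi t @[t --> t0^'+] --> z0 - G t0.
  apply: cvgB => //; exact: cvg_at_right_filter.
have G0 : G t0 = `|z0| + B / mu by rewrite /G subrr mulr0 expR0 mulr1.
have Bmu : 0 <= B / mu by rewrite divr_ge0 // ltW.
have lim_lt : z0 - G t0 < phi t1 / 2.
  rewrite G0; have := ler_norm z0; have : 0 < phi t1 / 2 by rewrite divr_gt0.
  lra.
have [t' [t't1 t0t' phit']] : exists t', [/\ t' < t1, t0 < t' & phi t' < phi t1 / 2].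
  have : \forall t \near t0^'+, [/\ t < t1, t0 < t & phi t < phi t1 / 2].
    near=> t; split.
    - near: t; exact: nbhs_right_lt.
    - near: t; exact: nbhs_right_gt.
    - near: t; apply: (cvgr_lt (z0 - G t0)) => //.
  by move=> /filter_ex [t' Ht']; exists t'.
have cphi' : {within `[t', t1], continuous phi}.
  apply: continuous_in_subspaceT => x; rewrite inE /= in_itv /= => /andP[x1 _].
  apply: cphi; exact: (lt_le_trans t0t').
have [c cin cmax] := EVT_max (ltW t't1) cphi'.
have phic : phi t1 <= phi c by apply: cmax; rewrite in_itv /= lexx ltW.
move: (cin); rewrite in_itv /= => /andP[tc ct1].
have t'c : t' < c.
  rewrite lt_neqAle tc andbT; apply/eqP => E; move: phit'; rewrite E; lra.
have [e e0 He] : exists2 e, 0 < e & forall x, `|c - x| < e -> 0 < phi x.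
  have : \forall x \near c, 0 < phi x.
    apply: (@cvgr_gt _ _ (nbhs c) _ phi (phi c) (cphi c (lt_trans t0t' t'c)) 0); lra.
  move=> /nbhs_normP [e /= e0 He]; exists e => // x cx; apply: He.
pose a := Num.max t' (c - e / 2).
have ac : a < c by rewrite /a gt_max t'c /=; lra.
have ta : t' <= a by rewrite /a le_max lexx.
pose df := fun t => derive1 z t - `|z0| * (expR (- mu * (t - t0)) * - mu).
have dphi' : forall x, x \in `]a, c[ -> is_derive x 1 phi (df x).
  move=> x; rewrite in_itv /= => /andP[ax _]; apply: dphi; lra.
have cphia : {within `[a, c], continuous phi}.
  apply: continuous_in_subspaceT => x; rewrite inE /= in_itv /= => /andP[x1 _].
  apply: cphi; lra.
have [d din dE] := MVT ac dphi' cphia.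
move: din; rewrite in_itv /= => /andP[ad dc].
have phid : 0 < phi d.
  apply: He; rewrite ger0_norm; last lra.
  have : c - e / 2 <= a by rewrite /a le_max lexx orbT.
  lra.
have zd : 0 < z d.
  move: phid; rewrite phiE /G.
  have : 0 <= `|z0| * expR (- mu * (d - t0)) by rewrite mulr_ge0 // ltW // expR_gt0.
  lra.
have dzd := dzle d ltac:(lra) zd.
have dfneg : df d < 0.
  rewrite /df.
  move: phid; rewrite phiE /G => phid.
  have muB : mu * (B / mu) = B by rewrite mulrCA divff ?mulr1 // gt_eqF.
  set X := `|z0| * expR (- mu * (d - t0)) in phid *.
  have -> : `|z0| * (expR (- mu * (d - t0)) * - mu) = - (mu * X) by rewrite /X; ring.
  nra.
have phia : phi a <= phi c by apply: cmax; rewrite in_itv /= ta /=; lra.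
have : df d * (c - a) < 0 by rewrite pmulr_llt0 // subr_gt0.
lra.
Unshelve. all: by end_near.
Qed.


Lemma cmp_abs (z : R -> R) (t0 mu B z0 : R) :
  0 < mu -> 0 <= B ->
  (forall t, t0 < t -> derivable z t 1) ->
  z t @[t --> t0^'+] --> z0 ->
  (forall t, t0 < t -> exists2 k, k <= - mu & `|derive1 z t - k * z t| <= B) ->
  forall t, t0 < t -> `|z t| <= `|z0| * expR (- mu * (t - t0)) + B / mu.
Proof.
move=> mu0 B0 dz zlim hk t tt.
have h1 := @cmp_pos z t0 mu B z0 mu0 B0 dz zlim.
have h2 := @cmp_pos (- z)%R t0 mu B (- z0) mu0 B0.
rewrite normrN in h2.
have : z t <= `|z0| * expR (- mu * (t - t0)) + B / mu.
  apply: h1 => // s ts zs.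
  have [k k0 hks] := hk s ts.
  have := ler_norm (derive1 z s - k * z s).
  have : k * z s <= - mu * z s by rewrite ler_pM2r.
  lra.
have : - z t <= `|z0| * expR (- mu * (t - t0)) + B / mu.
  apply: h2 => //.
  - by move=> s ts; apply: derivableN; exact: dz.
  - exact: cvgN.
  move=> s ts; rewrite !fctE => zs.
  rewrite derive1N; last exact: dz.
  have [k k0 hks] := hk s ts.
  have := ler_norm (- (derive1 z s - k * z s)); rewrite normrN.
  have : k * (- z s) <= - mu * (- z s) by rewrite ler_pM2r.
  lra.
move=> a b; rewrite ler_norml; apply/andP; split; lra.
Qed.
End S.

Section S.
Variable R : realType.

Lemma is_derive_lin n (a : 'I_n -> R) (h : 'I_n -> R -> R) (dh : 'I_n -> R) (x : R) :
  (forall i, is_derive x 1 (h i) (dh i)) ->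
  is_derive x 1 (fun s => \sum_(i < n) a i * h i s) (\sum_(i < n) a i * dh i).
Proof.
move=> hd.
have -> : (fun s => \sum_(i < n) a i * h i s) = \sum_(i < n) (a i *: h i).
  by apply/funext => s; rewrite fct_sumE.
apply: is_derive_sum => i.
Qed.

Lemma mx_deriv m n (A : 'M[R]_(m, n)) (g : 'I_n -> R -> R) (dg : 'I_n -> R) (t : R) :
  (forall i, is_derive t 1 (g i) (dg i)) ->
  derivable (fun s => A *m \col_i g i s) t 1 /\
  derive1 (fun s => A *m \col_i g i s) t = A *m \col_i dg i.
Proof.
move=> hd.
have comp : forall k j, (fun s => (A *m \col_i g i s) k j) = (fun s => \sum_(i < n) A k i * g i s).
  move=> k j; apply/funext => s; rewrite !mxE; apply: eq_bigr => i _; by rewrite mxE.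
have D : derivable (fun s => A *m \col_i g i s) t 1.
  apply/derivable_mxP => k j; rewrite comp.
  by have [] := @is_derive_lin n (A k) g dg t hd.
split => //.
rewrite derive1E derive_mx //; apply/matrixP => k j; rewrite !mxE comp.
have hk := @is_derive_lin n (A k) g dg t hd; rewrite derive_val.
by apply: eq_bigr => i _; rewrite mxE.
Qed.

Lemma eucl_sq_diag n (d : 'I_n -> R) (v : 'cV[R]_n) :
  eucl_sq (diag_mx (\row_i d i) *m v) = \sum_(i < n) (d i * v i 0) ^+ 2.
Proof.
by rewrite /eucl_sq; apply: eq_bigr => i _; rewrite mul_diag_mx !mxE.
Qed.

End S.

Section S.
Variable R : realType.

Lemma core (N : nat) (M : 'I_N -> R) (f xi : 'I_N -> R -> R) (omb : R -> R)
  (Y : 'M[R]_(N, N.-1)) (mu L T0 C zT0 : R) :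
  (0 < N)%N -> (forall i, 0 < M i) ->
  (forall i w, derivable (f i) w 1) ->
  0 < mu -> 0 < L ->
  (forall i w, - L <= derive1 (f i) w / M i <= - mu) ->
  (forall i t, 0 < t -> derivable (xi i) t 1) ->
  Y^T *m Y = 1%:M ->
  (forall t, 0 < t -> derivable omb t 1 /\ Mbar M * derive1 omb t = fbar f (omb t) + xibar xi t) ->
  0 <= T0 ->
  (fbar f (omb t) + xibar xi t) @[t --> T0^'+] --> zT0 ->
  (forall t i, T0 < t -> `|derive1 (xi i) t| / M i <= C) ->
  forall t, T0 < t ->
   eucl_sq (derive1 (tilde_f M Y f xi omb) t) <=
     N%:R * Mbar M * (C * (1 + L / mu) + L / Mbar M * (`|zT0| * expR (- mu * (t - T0)))) ^+ 2.
Proof.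
move=> N0 M0 df mu0 L0 dfb dxi YY bl T00 zlim xiC t tT.
set Mb := Mbar M.
have N0R : (0 : R) < N%:R by rewrite ltr0n.
have SM : \sum_(i < N) M i = N%:R * Mb.
  by rewrite /Mb /Mbar mulrA mulfV ?mul1r // gt_eqF.
have Mb0 : 0 < Mb.
  rewrite /Mb /Mbar; apply: mulr_gt0; first by rewrite invr_gt0.
  rewrite (bigD1 (Ordinal N0)) //=; apply: ltr_wpDr; last exact: M0.
  by apply: sumr_ge0 => i _; exact: ltW.
have C0 : 0 <= C.
  apply: le_trans (xiC (T0 + 1) (Ordinal N0) ltac:(lra)).
  by rewrite divr_ge0 // ltW.
pose g i := fun s => f i (omb s) + xi i s.
pose dg i s := derive1 (f i) (omb s) * derive1 omb s + derive1 (xi i) s.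
have hg : forall s : R, 0 < s -> forall i, is_derive s 1 (g i) (dg i s).
  move=> s s0 i.
  have -> : g i = ((f i \o omb) + xi i)%R by apply/funext.
  apply: is_deriveD; last by rewrite derive1E; apply/derivableP/dxi.
  apply: is_derive_comp1; first by rewrite derive1E; apply/derivableP/(bl s s0).1.
  rewrite derive1E; exact/derivableP/df.
have t0 : 0 < t by lra.
set w := derive1 omb t.
have [_ Dtf] := @mx_deriv R _ _ (Y^T *m Minvsqrt M) _ _ t (hg t t0).
have -> : derive1 (tilde_f M Y f xi omb) t = (Y^T *m Minvsqrt M) *m \col_i dg i t by exact: Dtf.
rewrite -mulmxA; apply: le_trans (@proj_le R _ _ Y _ YY) _.
rewrite /Minvsqrt eucl_sq_diag.
set W := L * `|w| + C.
have term : forall i, ((\row_i0 (Num.sqrt (M i0))^-1) 0 i * (\col_i0 dg i0 t) i 0) ^+ 2 <= M i * W ^+ 2.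
  move=> i; rewrite !mxE.
  have Mi := M0 i.
  have -> : ((Num.sqrt (M i))^-1 * dg i t) ^+ 2 = M i * (dg i t / M i) ^+ 2.
    rewrite exprMn exprVn sqr_sqrtr ?ltW // expr_div_n.
    field; exact: lt0r_neq0.
  apply: ler_wpM2l; first exact: ltW.
  have hx : `|dg i t / M i| <= W.
    have -> : dg i t / M i = (derive1 (f i) (omb t) / M i) * w + derive1 (xi i) t / M i.
      rewrite /dg /w; field; exact: lt0r_neq0.
    apply: le_trans (ler_normD _ _) _.
    rewrite /W; apply: lerD.
      rewrite normrM.
      have := dfb i (omb t); case/andP => h1 h2.
      rewrite [`|_ / M i|]ler0_norm; last lra.
      apply: ler_wpM2r => //; lra.
    rewrite normrM [`|(M i)^-1|]gtr0_norm ?invr_gt0 //; exact: xiC.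
  rewrite -(real_normK (num_real (dg i t / M i))) !expr2.
  by apply: ler_pM => //; exact: normr_ge0.
pose z := fun s => fbar f (omb s) + xibar xi s.
have zfun : z = fun s => \sum_(i < N) N%:R^-1 * g i s.
  apply/funext => s; rewrite /z /fbar /xibar -mulrDr -big_split mulr_sumr.
  by apply: eq_bigr.
have hz : forall s : R, 0 < s -> is_derive s 1 z (\sum_(i < N) N%:R^-1 * dg i s).
  by move=> s s0; rewrite zfun; apply: is_derive_lin; exact: hg.
have Hk : forall s, T0 < s -> exists2 k, k <= - mu & `|derive1 z s - k * z s| <= Mb * C.
  move=> s sT; have s0 : 0 < s by lra.
  set F' := \sum_(i < N) derive1 (f i) (omb s).
  set X := \sum_(i < N) derive1 (xi i) s.
  exists (F' / (N%:R * Mb)).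
    have NMb : 0 < N%:R * Mb by rewrite mulr_gt0.
    rewrite ler_pdivrMr //.
    have : F' <= \sum_(i < N) (- mu * M i).
      apply: ler_sum => i _; have := dfb i (omb s); case/andP => _ h.
      by move: h; rewrite ler_pdivrMr // mulNr.
    by rewrite -mulr_sumr SM; lra.
  have -> : derive1 z s = N%:R^-1 * (F' * derive1 omb s + X).
    have hzs := hz s s0; rewrite derive1E derive_val -mulr_sumr; congr (_ * _).
    by rewrite /F' /X mulr_suml -big_split.
  have -> : z s = Mb * derive1 omb s by rewrite /z -(bl s s0).2.
  have -> : N%:R^-1 * (F' * derive1 omb s + X) - F' / (N%:R * Mb) * (Mb * derive1 omb s)
     = N%:R^-1 * X.
    field; apply/andP; split; exact: lt0r_neq0.
  rewrite normrM gtr0_norm ?invr_gt0 //.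
  rewrite mulrC ler_pdivrMr //.
  have -> : Mb * C * N%:R = \sum_(i < N) (M i * C) by rewrite -mulr_suml SM; ring.
  apply: le_trans (ler_norm_sum _ _ _) _.
  apply: ler_sum => i _; have := xiC s i sT.
  by rewrite ler_pdivrMr // mulrC.
have dz : forall s, T0 < s -> derivable z s 1.
  by move=> s hs; have [] := hz s (le_lt_trans T00 hs).
have hzt := @cmp_abs R z T0 mu (Mb * C) zT0 mu0 (mulr_ge0 (ltW Mb0) C0) dz zlim Hk t tT.
have wE : w = z t / Mb.
  by rewrite /z -(bl t t0).2 /w mulrC mulKf //; exact: lt0r_neq0.
have Wle : W <= C * (1 + L / mu) + L / Mb * (`|zT0| * expR (- mu * (t - T0))).
  rewrite /W wE normrM [`|Mb^-1|]gtr0_norm ?invr_gt0 //.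
  have h : L * (`|z t| / Mb) <= L * ((`|zT0| * expR (- mu * (t - T0)) + Mb * C / mu) / Mb).
    apply: ler_wpM2l; first exact: ltW.
    by apply: ler_wpM2r => //; rewrite invr_ge0 ltW.
  have e1 : L * ((`|zT0| * expR (- mu * (t - T0)) + Mb * C / mu) / Mb) =
     C * (L / mu) + L / Mb * (`|zT0| * expR (- mu * (t - T0))).
    field; apply/andP; split; exact: lt0r_neq0.
  have e2 : C * (1 + L / mu) = C + C * (L / mu) by ring.
  rewrite e2; lra.
apply: (@le_trans _ _ (\sum_(i < N) M i * W ^+ 2)).
  apply: ler_sum => i _; have := term i; by rewrite mxE.
rewrite -mulr_suml SM.
apply: ler_wpM2l; first by rewrite mulr_ge0 // ltW.
have W0 : 0 <= W by rewrite /W addr_ge0 // mulr_ge0 // ltW.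
by rewrite !expr2; apply: ler_pM.
Qed.
End S.

Section S.
Variable R : realType.

Lemma cvg_sumR n (F : set_system R) (FF : Filter F) (h : 'I_n -> R -> R) (l : 'I_n -> R) :
  (forall i, h i x @[x --> F] --> l i) -> (\sum_(i < n) h i x) @[x --> F] --> \sum_(i < n) l i.
Proof.
move=> hl; apply: cvg_big => //.
exact: add_continuous.
Qed.

Lemma z_tf_derivable (N : nat) (M : 'I_N -> R) (f xi : 'I_N -> R -> R) (omb : R -> R)
  (Y : 'M[R]_(N, N.-1)) :
  (forall i w, derivable (f i) w 1) ->
  (forall i t, 0 < t -> derivable (xi i) t 1) ->
  (forall t, 0 < t -> derivable omb t 1) ->
  forall s : R, 0 < s -> derivable (fun s => fbar f (omb s) + xibar xi s) s 1 /\
     derivable (tilde_f M Y f xi omb) s 1.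
Proof.
move=> df dxi domb s s0.
pose g i := fun s => f i (omb s) + xi i s.
pose dg i s := derive1 (f i) (omb s) * derive1 omb s + derive1 (xi i) s.
have hg : forall i, is_derive s 1 (g i) (dg i s).
  move=> i.
  have -> : g i = ((f i \o omb) + xi i)%R by apply/funext.
  apply: is_deriveD; last by rewrite derive1E; apply/derivableP/dxi.
  apply: is_derive_comp1; first by rewrite derive1E; apply/derivableP/domb.
  rewrite derive1E; exact/derivableP/df.
split.
  have -> : (fun s => fbar f (omb s) + xibar xi s) = fun s => \sum_(i < N) N%:R^-1 * g i s.
    apply/funext => u; rewrite /fbar /xibar -mulrDr -big_split mulr_sumr.
    by apply: eq_bigr.
  by have [] := @is_derive_lin R N (fun=> N%:R^-1) g (fun i => dg i s) s hg.
by have [] := @mx_deriv R _ _ (Y^T *m Minvsqrt M) _ _ s hg.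
Qed.

End S.

Theorem lemmaA1 (R : realType) (N : nat) (M : 'I_N -> R) (f xi : 'I_N -> R -> R)
  (xi0 : 'I_N -> R) (omb : R -> R) (Y : 'M[R]_(N, N.-1)) (mu L : R) :
  (2 <= N)%N ->
  (forall i, 0 < M i) ->
  (forall i, f i 0 = 0) ->
  (forall i w, derivable (f i) w 1) ->
  (forall i, continuous (derive1 (f i))) ->
  0 < mu -> 0 < L ->
  (forall i w, - L <= derive1 (f i) w / M i <= - mu) ->
  (forall i t, 0 < t -> derivable (xi i) t 1) ->
  (forall i t, 0 < t -> {for t, continuous (derive1 (xi i))}) ->
  (forall i, xi i t @[t --> 0^'+] --> xi0 i) ->
  orthonormal_null_basis M Y ->
  blended_solution M f xi omb ->
  let tf := tilde_f M Y f xi omb in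
  (forall t, 0 < t -> derivable tf t 1) /\
  ((forall i, has_ubound (xi_rate_set M xi i)) ->
   forall t, 0 < t ->
     eucl_sq (derive1 tf t)
       <= 2 * N%:R * Mbar M * Cxi M xi ^+ 2 * (1 + L / mu) ^+ 2
          + 2 * N%:R * L ^+ 2 / Mbar M
            * `|fbar f (omb 0) + N%:R^-1 * \sum_(i < N) xi0 i| ^+ 2
            * expR (- (2 * mu * t))) /\
  (Clim_xi M xi \is a fin_num ->
   (limsup_pinfty (fun t => eucl_sq (derive1 tf t))
     <= (2 * N%:R * Mbar M * fine (Clim_xi M xi) ^+ 2 * (1 + L / mu) ^+ 2)%:E)%E).
Proof.
move=> N2 M0 f0 df cdf mu0 L0 dfb dxi cdxi xilim [YY _ _] [omb0 bl] tf.
have N0 : (0 < N)%N by apply: leq_trans N2.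
have dom : forall t : R, 0 < t -> derivable omb t 1 by move=> t /bl [].
have ZD := @z_tf_derivable R N M f xi omb Y df dxi dom.
have N0R : (0 : R) < N%:R by rewrite ltr0n.
set Mb := Mbar M.
have SM : \sum_(i < N) M i = N%:R * Mb.
  by rewrite /Mb /Mbar mulrA mulfV ?mul1r // gt_eqF.
have Mb0 : 0 < Mb.
  rewrite /Mb /Mbar; apply: mulr_gt0; first by rewrite invr_gt0.
  rewrite (bigD1 (Ordinal N0)) //=; apply: ltr_wpDr; last exact: M0.
  by apply: sumr_ge0 => i _; exact: ltW.
split; first by move=> t t0; exact: (ZD t t0).2.
split.
  move=> ub t t0.
  set z0 := fbar f (omb 0) + N%:R^-1 * \sum_(i < N) xi0 i.
  have zlim : (fbar f (omb t) + xibar xi t) @[t --> 0^'+] --> z0.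
    rewrite /z0 /fbar /xibar; apply: cvgD; apply: cvgM; try exact: cvg_cst.
      apply: cvg_sumR => i.
      apply: continuous_cvg; [exact: derivable_cont (df i _) | exact: omb0].
    apply: cvg_sumR => i; exact: xilim.
  have xiC : forall t i, 0 < t -> `|derive1 (xi i) t| / M i <= Cxi M xi.
    move=> s i s0; apply: (@le_trans _ _ (sup (xi_rate_set M xi i))).
      apply: sup_upper_bound; last by exists s.
      split; last exact: ub.
      by exists (`|derive1 (xi i) s| / M i); exists s.
    rewrite /Cxi; exact: le_bigmax.
  have := @core R N M f xi omb Y mu L 0 (Cxi M xi) z0 N0 M0 df mu0 L0 dfb dxi YY bl (lexx 0) zlim xiC t t0.
  move=> H; apply: le_trans H _.
  rewrite -/Mb subr0.
  set a := Cxi M xi * (1 + L / mu).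
  set e := expR (- mu * t).
  set b := L / Mb * (`|z0| * e).
  have ee : expR (- (2 * mu * t)) = e ^+ 2 by rewrite expr2 -expRD; congr expR; ring.
  rewrite ee.
  have -> : 2 * N%:R * Mb * Cxi M xi ^+ 2 * (1 + L / mu) ^+ 2 +
     2 * N%:R * L ^+ 2 / Mb * `|z0| ^+ 2 * e ^+ 2 = N%:R * Mb * (2 * a ^+ 2 + 2 * b ^+ 2).
    by rewrite /a /b; field; rewrite !lt0r_neq0.
  apply: ler_wpM2l; first by rewrite mulr_ge0 // ltW.
  rewrite -subr_ge0.
  have -> : 2 * a ^+ 2 + 2 * b ^+ 2 - (a + b) ^+ 2 = (a - b) ^+ 2 by ring.
  exact: sqr_ge0.
move=> Cfin.
set c := fine (Clim_xi M xi).
have Cc : Clim_xi M xi = c%:E by rewrite /c fineK.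
set K := 1 + L / mu.
have LM : 0 < L / mu by rewrite divr_gt0.
have K0 : 0 < K by rewrite /K; lra.
have li : forall i, (limsup_pinfty (fun t => (`|derive1 (xi i) t| / M i)%R) <= c%:E)%E.
  by move=> i; rewrite -Cc /Clim_xi; exact: le_bigmax.
have pinf0 : ~ pinfty_nbhs R set0.
  by move=> [T0 [_ H]]; apply: (H (T0 + 1)); lra.
have c0 : 0 <= c.
  rewrite -lee_fin; apply: le_trans (li (Ordinal N0)).
  apply: limf_esup_ge0 => // x; rewrite lee_fin divr_ge0 // ltW //.
set A := 2 * N%:R * Mb * c ^+ 2 * K ^+ 2.
apply/lee_addgt0Pr => eps eps0.
have K2 : 0 < K ^+ 2 by exact: exprn_gt0.
have h4 : 0 < 4 * N%:R :> R by apply: mulr_gt0.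
have h5 : 0 < 4 * N%:R * Mb by exact: mulr_gt0.
have NMbK : 0 < 4 * N%:R * Mb * K ^+ 2 by exact: mulr_gt0.
set eps' := eps / (4 * N%:R * Mb * K ^+ 2).
have eps'0 : 0 < eps' by rewrite divr_gt0.
set dl := eps' / (2 * c + 1 + eps').
have den0 : 0 < 2 * c + 1 + eps' by lra.
have dl0 : 0 < dl by rewrite divr_gt0.
have dlE : dl * (2 * c + 1 + eps') = eps' by rewrite /dl mulfVK // lt0r_neq0.
have dl1 : dl < 1.
  rewrite /dl ltr_pdivrMr // mul1r; lra.
have Adl : 2 * N%:R * Mb * ((c + dl) * K) ^+ 2 <= A + eps / 2.
  have h1 : (c + dl) ^+ 2 <= c ^+ 2 + eps' by nra.
  have -> : A + eps / 2 = 2 * N%:R * Mb * K ^+ 2 * (c ^+ 2 + eps').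
    by rewrite /A /eps'; field; rewrite !lt0r_neq0.
  have -> : 2 * N%:R * Mb * ((c + dl) * K) ^+ 2 = 2 * N%:R * Mb * K ^+ 2 * (c + dl) ^+ 2 by ring.
  apply: ler_wpM2l => //.
  lra.
have ev : forall i, pinfty_nbhs R (fun x => `|derive1 (xi i) x| / M i <= c + dl).
  move=> i.
  have : (limsup_pinfty (fun t => (`|derive1 (xi i) t| / M i)%R) < (c + dl)%:E)%E.
    apply: le_lt_trans (li i) _; rewrite lte_fin; lra.
  rewrite /limsup_pinfty limf_esupE => /ereal_inf_lt [_ [V FV <-]] Vlt.
  apply: filterS FV => x Vx.
  rewrite -lee_fin; apply: le_trans (ltW Vlt).
  by apply: ereal_sup_ubound; exists x.
have [T [_ HT]] := @filter_forall R _ _ (pinfty_nbhs R) _ ev.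
set T1 := Num.max T 1.
have T10 : 0 < T1 by rewrite /T1 lt_max ltr01 orbT.
have xiC1 : forall t i, T1 < t -> `|derive1 (xi i) t| / M i <= c + dl.
  by move=> t i; rewrite /T1 gt_max => /andP[Tt _]; exact: HT.
set zT := fbar f (omb T1) + xibar xi T1.
have zlim : (fbar f (omb t) + xibar xi t) @[t --> T1^'+] --> zT.
  apply: cvg_at_right_filter; exact: derivable_cont (ZD T1 T10).1.
have cor := @core R N M f xi omb Y mu L T1 (c + dl) zT N0 M0 df mu0 L0 dfb dxi YY bl (ltW T10) zlim xiC1.
set D := 2 * N%:R * Mb * (L / Mb * `|zT|) ^+ 2.
have D0 : 0 <= D by rewrite /D; apply: mulr_ge0; [lra|exact: sqr_ge0].
set T2 := T1 + 2 * D / (eps * mu).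
have T12 : T1 <= T2.
  rewrite /T2 lerDl; apply: divr_ge0; first lra.
  by rewrite mulr_ge0 // ltW.
have bnd : forall t, T2 < t -> eucl_sq (derive1 tf t) <= A + eps.
  move=> t tT2.
  have tT1 : T1 < t by apply: le_lt_trans tT2.
  apply: le_trans (cor t tT1) _.
  set e := expR (- mu * (t - T1)).
  set s := mu * (t - T1).
  have e0 : 0 <= e by rewrite ltW // expR_gt0.
  have es : e * (1 + s) <= 1.
    have -> : e = (expR s)^-1 by rewrite /e /s -expRN mulNr.
    rewrite mulrC ler_pdivrMr ?expR_gt0 // mul1r; exact: expR_ge1Dx.
  have s0 : 0 <= s by rewrite /s mulr_ge0 // ?subr_ge0 ltW.
  have Ds : D <= eps / 2 * (1 + s).
    have : 2 * D / (eps * mu) < t - T1 by rewrite /T2 in tT2; lra.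
    rewrite ltr_pdivrMr ?mulr_gt0 // => h.
    rewrite /s; nra.
  have De : D * e ^+ 2 <= eps / 2.
    have e1 : e <= 1 by nra.
    have : D * e ^+ 2 <= D * e by apply: ler_wpM2l => //; rewrite expr2; nra.
    nra.
  set a := (c + dl) * K.
  set b := L / Mb * (`|zT| * e).
  have -> : N%:R * Mb * (a + b) ^+ 2 =
     2 * N%:R * Mb * a ^+ 2 + D * e ^+ 2 - N%:R * Mb * (a - b) ^+ 2.
    by rewrite /D /b; ring.
  have Adl' : 2 * N%:R * Mb * a ^+ 2 <= A + eps / 2 by exact: Adl.
  have : 0 <= N%:R * Mb * (a - b) ^+ 2 by rewrite mulr_ge0 ?sqr_ge0 // mulr_ge0 // ltW.
  lra.
rewrite /limsup_pinfty limf_esupE -EFinD.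
apply: (@le_trans _ _ (ereal_sup ((fun t => (eucl_sq (derive1 tf t))%:E) @` [set t | T2 < t]))).
  apply: ereal_inf_lbound; exists [set t | T2 < t] => //.
  by exists T2; split => //; exact: num_real.
apply: ge_ereal_sup => _ [t /= tT2 <-].
by rewrite lee_fin; exact: bnd.
Qed.
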